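(* For every integer $n\ge 2$, the path $P_n$ on $n$ vertices satisfies $\lambda(P_n)=\lfloor n/2\rfloor$.
   Context: All graphs are finite and simple; $d(u,v)$ denotes the usual graph distance. For integers $m\le n$, $[m,n]=\{m,m+1,\ldots,n\}$. For a graph $G$ and a positive integer $l$, a distance $l$-labeling of $G$ is a function $f:V(G)\to[0,l]$ such that (i) $f(V(G))=[0,l]$ or $f(V(G))=[1,l]$, and (ii) whenever two distinct vertices $u,v$ satisfy $f(u)=f(v)=k$, we have $d(u,v)=k$. The labeling length $\lambda(G)$ is the minimum $l$ for which $G$ admits a distance $l$-labeling. *)

(* Defs.v *)
From mathcomp Require Import all_boot.
Set Implicit Arguments. Unset Strict Implicit. Unset Printing Implicit Defensive.

(* A simple graph: finite vertex type T with a symmetric irreflexive relation e. *)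

Fixpoint walk_k (T : finType) (e : rel T) (k : nat) (u v : T) : bool :=
  match k with
  | 0 => u == v
  | k'.+1 => [exists w : T, e u w && walk_k e k' w v]
  end.

(* d(u,v) = k : the shortest walk from u to v has exactly k edges
   (this never holds when u, v lie in different components, where d = oo). *)
Definition dist_eq (T : finType) (e : rel T) (u v : T) (k : nat) : bool :=
  walk_k e k u v && [forall j : 'I_k, ~~ walk_k e j u v].

Definition path_rel (n : nat) : rel 'I_n :=
  fun i j => (i.+1 == j :> nat) || (j.+1 == i :> nat).
Arguments path_rel n : clear implicits.

Definition distance_labeling (T : finType) (e : rel T) (l : nat) (f : T -> nat) : Prop :=
  (forall x, f x <= l) /\
  ((forall k, k <= l -> exists x, f x = k) \/
   ((forall x, 1 <= f x) /\ (forall k, 1 <= k <= l -> exists x, f x = k))) /\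
  (forall u v, u != v -> f u = f v -> dist_eq e u v (f u)).

Definition labeling_length (T : finType) (e : rel T) (l : nat) : Prop :=
  0 < l /\ (exists f, distance_labeling e l f) /\
  (forall l' f, 0 < l' -> distance_labeling e l' f -> l <= l').

(* Main.v *)
Require Import Defs.
From mathcomp Require Import all_boot.
From mathcomp Require Import zify.

Definition ad (a b : nat) := (a - b) + (b - a).

Lemma walk_le n j (u v : 'I_n) : walk_k (path_rel n) j u v -> ad u v <= j.
Proof.
elim: j u => [|j IH] u /=.
  by move/eqP => ->; rewrite /ad subnn.
case/existsP => w /andP [Huw /IH]; move: Huw; rewrite /path_rel /ad => /orP[] /eqP; lia.
Qed.

Lemma walk_ex n d (u v : 'I_n) : ad u v = d -> walk_k (path_rel n) d u v.
Proof.
elim: d u => [|d IH] u /=.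
  by rewrite /ad => H; apply/eqP/val_inj => /=; lia.
move=> H.
have [Hlt|Hge] := ltnP u v.
  have Hw : u.+1 < n by have := ltn_ord v; lia.
  apply/existsP; exists (Ordinal Hw); apply/andP; split.
    by rewrite /path_rel /= eqxx.
  apply: IH; rewrite /ad /=; move: H; rewrite /ad; lia.
have Hw : u.-1 < n by have := ltn_ord u; lia.
apply/existsP; exists (Ordinal Hw); apply/andP; split.
  rewrite /path_rel /=; apply/orP; right; apply/eqP; move: H; rewrite /ad; lia.
apply: IH; rewrite /ad /=; move: H; rewrite /ad; lia.
Qed.

Lemma dist_iff n (u v : 'I_n) k : dist_eq (path_rel n) u v k -> ad u v = k.
Proof.
case/andP => /walk_le H1 /forallP H2.
apply/eqP; rewrite eqn_leq; rewrite H1 /=; rewrite leqNgt; apply/negP => Hlt.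
have := H2 (Ordinal Hlt); by rewrite walk_ex.
Qed.

Arguments dist_iff {n u v k}.
Lemma dist_iff2 n (u v : 'I_n) k : ad u v = k -> dist_eq (path_rel n) u v k.
Proof.
move=> H; apply/andP; split; first exact: walk_ex.
apply/forallP => j; apply/negP => /walk_le; have := ltn_ord j; lia.
Qed.

Definition lab (n : nat) (i : nat) : nat :=
  let m := n./2 in
  if odd n then (if i <= m then ad m (i.*2) else ad (3 * m).+1 (i.*2))
  else (if i < m then ad m.-1 (i.*2) else if i == m then m else ad (3 * m) (i.*2)).

Theorem mainTheorem2 (n : nat) (hn : 2 <= n) :
  labeling_length (path_rel n) n./2.
Proof.
have Hn := odd_double_half n.
split; first by move: Hn; case: (odd n) => /=; lia.
split.
  exists (fun i : 'I_n => lab n i).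
  split; [|split].
  - move=> x; have := ltn_ord x; move: Hn; rewrite /lab /ad.
    case: (odd n) => /=; repeat case: ifP; lia.
  - left => k Hk.
    case Ho : (odd n) Hn => /= Hn.
    + have [j A] : exists j, n./2 - k = j.*2 \/ n./2 - k = j.*2.+1.
        have := odd_double_half (n./2 - k); case: (odd _) => /= B; exists (n./2 - k)./2; lia.
      case: A => A.
      * have Hx : j < n by lia.
        exists (Ordinal Hx); rewrite /lab Ho /=; case: ifP; rewrite /ad; lia.
      * have Hx : n./2 + j + 1 < n by lia.
        exists (Ordinal Hx); rewrite /lab Ho /=; case: ifP; rewrite /ad; lia.
    + have [E|Hk'] := eqVneq k n./2.
        have Hx : n./2 < n by lia.
        exists (Ordinal Hx); rewrite /lab Ho /= ltnn eqxx; lia.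
      have [j A] : exists j, (n./2 - k).-1 = j.*2 \/ (n./2 - k).-1 = j.*2.+1.
        have := odd_double_half (n./2 - k).-1; case: (odd _) => /= B; exists (n./2 - k).-1./2; lia.
      case: A => A.
      * have Hx : j < n by lia.
        exists (Ordinal Hx); rewrite /lab Ho /=; repeat case: ifP; rewrite /ad; lia.
      * have Hx : n./2 + j + 1 < n by lia.
        exists (Ordinal Hx); rewrite /lab Ho /=; repeat case: ifP; rewrite /ad; lia.
  - move=> u v Huv Hf; apply: dist_iff2.
    have Huv' : (u : nat) <> v by move=> h; move/negP: Huv; apply; apply/eqP/val_inj.
    have := ltn_ord u; have := ltn_ord v.
    move: Hf Hn; rewrite /lab /ad; case: (odd n) => /=; repeat case: ifP; lia.
move=> l f Hl [Hle [_ Hd]].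
pose bit (i : 'I_n) := [exists j : 'I_n, (j < i) && (f j == f i)].
pose g (i : 'I_n) : 'I_(l.*2.+1) := inord ((f i).*2 + bit i).-1.
have H0 : forall i, f i = 0 -> bit i = false.
  move=> i Hi; rewrite /bit; apply/negbTE/negP => /existsP [j /andP [Hji /eqP Hfj]].
  have Hne : j != i by rewrite neq_ltn Hji.
  have := dist_iff (Hd _ _ Hne Hfj); rewrite Hfj Hi /ad; lia.
have Hg : injective g.
  move=> i i' /(congr1 val); rewrite /g /= !inordK; first last.
  - have := Hle i; have := Hle i'; case: (bit i); case: (bit i'); lia.
  - have := Hle i; have := Hle i'; case: (bit i); case: (bit i'); lia.
  move=> E.
  have [Efi Eb] : f i = f i' /\ bit i = bit i'.
    move: E (H0 i) (H0 i'); case: (bit i); case: (bit i'); lia.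
  clear E; wlog Hlt : i i' Efi Eb / i < i'.
    move=> W; have [h|h|h] := ltngtP i i'.
    - exact: W.
    - by apply/esym/W.
    - exact: val_inj.
  exfalso.
  have Hb : bit i' by apply/existsP; exists i; rewrite Hlt Efi eqxx.
  move: Hb; rewrite -Eb /bit => /existsP [j /andP [Hji /eqP Hfj]].
  have N1 : j != i by rewrite neq_ltn Hji.
  have N2 : i != i' by rewrite neq_ltn Hlt.
  have N3 : j != i' by rewrite neq_ltn (ltn_trans Hji Hlt).
  have D1 := dist_iff (Hd _ _ N1 Hfj).
  have D2 := dist_iff (Hd _ _ N2 Efi).
  have D3 := dist_iff (Hd _ _ N3 (etrans Hfj Efi)).
  move: D1 D2 D3; rewrite Hfj /ad; lia.
have := leq_card g Hg; rewrite !card_ord.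
move: Hn; case: (odd n) => /=; lia.
Qed.
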